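(* Let $m_1,m_2\ge 1$ be integers with $\gcd(m_1,m_2)=1$, and let $a\ne b$ be complex numbers such that $T_{m_1}(a)=T_{m_1}(b)$ and $T_{m_2}(a)=T_{m_2}(b)$. Then $T_{m_1m_2}'(a)=T_{m_1m_2}'(b)=0$.
   Context: $T_n$ denotes the Chebyshev polynomial of the first kind of degree $n$, defined by $T_n(\cos\phi)=\cos(n\phi)$. *)

(* Defs.v *)
From HB Require Import structures.
From mathcomp Require Import all_boot all_order all_algebra.
Set Implicit Arguments. Unset Strict Implicit. Unset Printing Implicit Defensive.
Import Order.TTheory GRing.Theory Num.Theory.
Local Open Scope ring_scope.

(* Chebyshev polynomials of the first kind, via the standard recurrence
   T_0 = 1, T_1 = X, T_(n+2) = 2 X T_(n+1) - T_n
   (equivalent to T_n(cos phi) = cos(n phi)).  cheb_pair n = (T_n, T_(n+1)). *)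
Fixpoint cheb_pair (R : nzRingType) (n : nat) : {poly R} * {poly R} :=
  match n with
  | 0%N => (1, 'X)
  | n'.+1 => let: (p, q) := cheb_pair R n' in (q, 2%:P * 'X * q - p)
  end.

Definition chebT (R : nzRingType) (n : nat) : {poly R} := (cheb_pair R n).1.

(* Main.v *)
Require Import Defs.
From HB Require Import structures.
From mathcomp Require Import all_boot all_order all_algebra ring.
Import Order.TTheory GRing.Theory Num.Theory.
Local Open Scope ring_scope.

Lemma chebT_rec (R : nzRingType) n :
  chebT R n.+2 = 2%:P * 'X * chebT R n.+1 - chebT R n.
Proof. by rewrite /chebT /=; case: (cheb_pair R n). Qed.

Lemma chebT0 (R : nzRingType) : chebT R 0 = 1. Proof. by []. Qed.
Lemma chebT1 (R : nzRingType) : chebT R 1 = 'X. Proof. by []. Qed.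

Section S.
Variable C : numClosedFieldType.

Definition Pn (u : C) n :=
  (chebT C n).[(u + u^-1)/2] = (u^+n + (u^+n)^-1)/2 /\
  ((u - u^-1)/2) * (chebT C n)^`().[(u + u^-1)/2] = n%:R * (u^+n - (u^+n)^-1)/2.

Lemma cheb_eval {u : C} n : u != 0 -> Pn u n.
Proof.
move=> u0.
have two0 : (2:C) != 0 by rewrite pnatr_eq0.
suff: Pn u n /\ Pn u n.+1 by case.
elim: n => [|n [[IH1 IH2] [IH3 IH4]]].
  rewrite /Pn chebT0 chebT1 derivC derivX !hornerE /=.
  split; split; try field; by [].
split; first by split.
rewrite /Pn chebT_rec !derivE !hornerE /=.
rewrite /Pn in IH1 IH2 IH3 IH4.
split.
  rewrite IH1 IH3.
  have Pn0 : u ^+ n != 0 by rewrite expf_neq0.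
  rewrite !exprS; field; by rewrite Pn0 u0.
set x := (u + u^-1) / 2.
transitivity (2 * ((u - u^-1) / 2) * (chebT C n.+1).[x] +
   (u + u^-1) * ((u - u^-1) / 2 * (chebT C n.+1)^`().[x])
   - (u - u^-1) / 2 * (chebT C n)^`().[x]).
  rewrite /x; field; by [].
rewrite IH2 IH4 IH3.
have Pn0 : u ^+ n != 0 by rewrite expf_neq0.
rewrite !exprS -!natr1; field; by rewrite Pn0 u0.
Qed.

Lemma two_neq0 : (2:C) != 0. Proof. by rewrite pnatr_eq0. Qed.

Lemma root_param (a : C) : exists2 u : C, u != 0 & a = (u + u^-1)/2.
Proof.
set u := a + sqrtC (a^+2 - 1).
have h : (u - a)^+2 = a^+2 - 1 by rewrite /u addrAC subrr add0r sqrtCK.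
have e : u^+2 + 1 - 2*a*u = 0.
  rewrite -[LHS](_ : (u - a)^+2 - (a^+2 - 1) = _); first by rewrite h subrr.
  ring.
have u0 : u != 0.
  apply/eqP=> u0; move: e; rewrite u0 expr0n /= mulr0 subr0 add0r => /eqP.
  by rewrite oner_eq0.
exists u => //.
apply/eqP; rewrite eq_sym -subr_eq0.
rewrite (_ : _ - a = (u^+2 + 1 - 2*a*u)/(2*u)); first by rewrite e mul0r.
by field; rewrite ?two_neq0 ?u0.
Qed.

Lemma eq_inv_sum (p q : C) : p != 0 -> q != 0 -> (p + p^-1)/2 = (q + q^-1)/2 ->
  p = q \/ p * q = 1.
Proof.
move=> p0 q0 h.
have : (p - q) * (p * q - 1) = 0.
  rewrite (_ : _ * _ = ((p + p^-1)/2 - (q + q^-1)/2) * (2 * p * q)).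
    by rewrite h subrr mul0r.
  by field; rewrite ?two_neq0 ?p0 ?q0.
move/eqP; rewrite mulf_eq0 !subr_eq0 => /orP[/eqP|/eqP]; by [left|right].
Qed.

Lemma root_one (w : C) (m1 m2 : nat) : (0 < m1)%N -> coprime m1 m2 ->
  w ^+ m1 = 1 -> w ^+ m2 = 1 -> w = 1.
Proof.
move=> m1p cop h1 h2.
have [k _ hd] := Bezoutl m2 m1p.
move: hd; rewrite (eqP cop) => /dvdnP[j hj].
have : w ^+ (1 + k * m2) = w ^+ (j * m1) by rewrite hj.
by rewrite exprD expr1 mulnC exprM h2 expr1n mulr1 mulnC exprM h1 expr1n.
Qed.

Lemma deriv_zero (u : C) (N : nat) : u != 0 -> u ^+ 2 != 1 -> u ^+ (2 * N) = 1 ->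
  (chebT C N)^`().[(u + u^-1)/2] = 0.
Proof.
move=> u0 u2 uN.
have [_ h] := cheb_eval N u0.
have hN : u ^+ N - (u ^+ N)^-1 = 0.
  have PN : u ^+ N != 0 by rewrite expf_neq0.
  rewrite (_ : _ - _ = (u ^+ (2 * N) - 1) / u ^+ N); first by rewrite uN subrr mul0r.
  by rewrite mulnC exprM; move: PN; set P := u ^+ N => PN; field.
rewrite hN mulr0 mul0r in h.
move/eqP: h; rewrite mulf_eq0 => /orP[|/eqP //].
rewrite mulf_eq0 invr_eq0 (negbTE two_neq0) orbF subr_eq0 => /eqP e.
exfalso; move/negP: u2; apply; apply/eqP.
by rewrite expr2 {2}e divff.
Qed.

Lemma key (u v : C) (m1 m2 : nat) : u != 0 -> v != 0 -> u != v ->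
  (0 < m1)%N -> (0 < m2)%N -> coprime m1 m2 ->
  (u / v) ^+ m1 = 1 -> (u * v) ^+ m2 = 1 ->
  [/\ u ^+ 2 != 1, u ^+ (2 * (m1 * m2)) = 1, v ^+ 2 != 1 & v ^+ (2 * (m1 * m2)) = 1].
Proof.
move=> u0 v0 uv m1p m2p cop h1 h2.
set w := u / v in h1; set z := u * v in h2.
have w0 : w != 0 by rewrite mulf_neq0 ?invr_eq0.
have z0 : z != 0 by rewrite mulf_neq0.
have eu : u ^+ 2 = w * z by rewrite /w /z; field; rewrite ?u0 ?v0 ?w0 ?z0.
have ev : v ^+ 2 = z / w by rewrite /w /z; field; rewrite ?u0 ?v0 ?w0 ?z0.
have wN : w ^+ (m1 * m2) = 1 by rewrite exprM h1 expr1n.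
have zN : z ^+ (m1 * m2) = 1 by rewrite mulnC exprM h2 expr1n.
have w1 : w != 1 by apply/eqP => /divr1_eq; apply/eqP.
split.
- apply/eqP; rewrite eu => wz; move/negP: w1; apply; apply/eqP.
  have e : w = z^-1 by rewrite -[RHS]mul1r -wz; field; rewrite ?u0 ?v0 ?w0 ?z0.
  by apply: (@root_one w m1 m2 m1p cop h1); rewrite e exprVn h2 invr1.
- by rewrite exprM eu exprMn wN zN mulr1.
- apply/eqP; rewrite ev => wz; move/negP: w1; apply; apply/eqP.
  have e : w = z by rewrite -[w]mul1r -wz; field; rewrite ?u0 ?v0 ?w0 ?z0.
  by apply: (@root_one w m1 m2 m1p cop h1); rewrite e.
- by rewrite exprM ev exprMn exprVn wN zN invr1 mulr1.
Qed.

End S.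
Arguments root_param {C}. Arguments eq_inv_sum {C}. Arguments root_one {C}. Arguments cheb_eval {C u}.

Theorem corollary2p1 (C : numClosedFieldType) (m1 m2 : nat) (a b : C) :
  (1 <= m1)%N -> (1 <= m2)%N -> coprime m1 m2 ->
  a != b ->
  (chebT C m1).[a] = (chebT C m1).[b] ->
  (chebT C m2).[a] = (chebT C m2).[b] ->
  (chebT C (m1 * m2))^`().[a] = 0 /\ (chebT C (m1 * m2))^`().[b] = 0.
Proof.
move=> m1p m2p cop ab h1 h2.
have [u u0 ea] := root_param a.
have [v v0 eb] := root_param b; subst a b.
have [hu1 _] := cheb_eval m1 u0; have [hv1 _] := cheb_eval m1 v0.
have [hu2 _] := cheb_eval m2 u0; have [hv2 _] := cheb_eval m2 v0.
have uv : u != v by apply/eqP => e; move/negP: ab; apply; rewrite e.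
have uv1 : u * v != 1.
  apply/eqP => e; move/negP: ab; apply; apply/eqP.
  have -> : v = u^-1 by rewrite -[RHS]mul1r -e; field; rewrite ?u0 ?v0 ?w0 ?z0.
  by rewrite invrK addrC.
have Pu (m : nat) : u ^+ m != 0 by rewrite expf_neq0.
have Pv (m : nat) : v ^+ m != 0 by rewrite expf_neq0.
have E1 := eq_inv_sum _ _ (Pu m1) (Pv m1) (etrans (esym hu1) (etrans h1 hv1)).
have E2 := eq_inv_sum _ _ (Pu m2) (Pv m2) (etrans (esym hu2) (etrans h2 hv2)).
have cE (m : nat) : u^+m = v^+m -> (u/v)^+m = 1.
  by move=> e; rewrite exprMn exprVn e divff.
have cF (m : nat) : u^+m * v^+m = 1 -> (u*v)^+m = 1.
  by move=> e; rewrite exprMn e.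
have fin : [/\ u ^+ 2 != 1, u ^+ (2 * (m1 * m2)) = 1, v ^+ 2 != 1 & v ^+ (2 * (m1 * m2)) = 1].
  case: E1 => [e1|f1]; case: E2 => [e2|f2].
  - exfalso; move/negP: uv; apply; apply/eqP; apply: divr1_eq.
    exact: (root_one _ _ _ m1p cop (cE _ e1) (cE _ e2)).
  - by apply: key => //; [exact: cE | exact: cF].
  - by rewrite [(m1 * m2)%N]mulnC; apply: key => //; [rewrite coprime_sym | exact: cE | exact: cF].
  - exfalso; move/negP: uv1; apply; apply/eqP.
    exact: (root_one _ _ _ m1p cop (cF _ f1) (cF _ f2)).
case: fin => a1 a2 b1 b2.
by split; apply: deriv_zero.
Qed.
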